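(* Suppose the positive sequences $\{\gamma_k\}$, $\{\lambda_k\}$ satisfy Assumption (A2), and let $\{x_k\}$ be generated by the IR-IG method. Then (a) $\lim_{k\to\infty}\|x_k-x_{\lambda_{k-1}}^*\|=0$; (b) if in addition $\lim_{k\to\infty}\lambda_k=0$, then $x_k\to x_h^*$.
   Context: Standing setup: $X\subset\mathbb{R}^n$ is nonempty, compact and convex. $f_1,\dots,f_m:\mathbb{R}^n\to\mathbb{R}$ are convex (possibly nondifferentiable) functions and $f=\sum_{i=1}^m f_i$. $h:\mathbb{R}^n\to\mathbb{R}$ is strongly convex with parameter $\mu_h>0$ (possibly nondifferentiable). Let $X^*=\arg\min_{x\in X}f(x)$ and let $x_h^*$ be the unique minimizer of $h$ over $X^*$. For $\lambda>0$, $x_\lambda^*$ denotes the unique minimizer of $f+\lambda h$ over $X$. $\mathcal{P}_X$ denotes Euclidean projection onto $X$. IR-IG method: given $x_0\in X$ and positive sequences $\{\gamma_k\}$, $\{\lambda_k\}$, for each $k\ge0$ set $x_{k,0}=x_k$; for $i=0,\dots,m-1$ pick any $g_{f_{i+1}}(x_{k,i})\in\partial f_{i+1}(x_{k,i})$ and $g_h(x_{k,i})\in\partial h(x_{k,i})$ and set $x_{k,i+1}=\mathcal{P}_X\big(x_{k,i}-\gamma_k\big(g_{f_{i+1}}(x_{k,i})+\tfrac{\lambda_k}{m}g_h(x_{k,i})\big)\big)$; then set $x_{k+1}=x_{k,m}$. Assumption (A2) on $\{\gamma_k\},\{\lambda_k\}$: (a) both are non-increasing positive sequences with $\gamma_0\lambda_0\le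 2m/\mu_h$; (b) $\sum_{k=0}^\infty\gamma_k\lambda_k=\infty$; (c) $\sum_{k=1}^\infty\frac{1}{\gamma_k\lambda_k}\left(\frac{\lambda_{k-1}}{\lambda_k}-1\right)^2<\infty$; (d) $\sum_{k=0}^\infty\gamma_k^2<\infty$; (e) $\lim_{k\to\infty}\frac{1}{\gamma_k^2\lambda_k^2}\left(\frac{\lambda_{k-1}}{\lambda_k}-1\right)^2=0$; (f) $\lim_{k\to\infty}\gamma_k/\lambda_k=0$. *)

(* Defs.v *)
From mathcomp Require Import ssreflect ssrfun ssrbool eqtype ssrnat seq fintype bigop.
From Stdlib Require Import Reals.
Open Scope R_scope.

Definition vec (n : nat) := 'I_n -> R.

Definition vadd {n} (x y : vec n) : vec n := fun i => x i + y i.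
Definition vsub {n} (x y : vec n) : vec n := fun i => x i - y i.
Definition vscale {n} (a : R) (x : vec n) : vec n := fun i => a * x i.
Definition dot {n} (x y : vec n) : R := \big[Rplus/0]_(i < n) (x i * y i).
Definition vnorm {n} (x : vec n) : R := sqrt (dot x x).

Definition convex_set {n} (X : vec n -> Prop) : Prop :=
  forall x y t, X x -> X y -> 0 <= t <= 1 ->
    X (vadd (vscale t x) (vscale (1 - t) y)).
(* Compactness in R^n (Heine-Borel): closed and bounded. *)
Definition closed_set {n} (X : vec n -> Prop) : Prop :=
  forall (u : nat -> vec n) (l : vec n),
    (forall k, X (u k)) -> Un_cv (fun k => vnorm (vsub (u k) l)) 0 -> X l.
Definition bounded_set {n} (X : vec n -> Prop) : Prop :=
  exists M, forall x, X x -> vnorm x <= M.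
Definition compact_set {n} (X : vec n -> Prop) : Prop :=
  closed_set X /\ bounded_set X.

Definition convex_fun {n} (f : vec n -> R) : Prop :=
  forall x y t, 0 <= t <= 1 ->
    f (vadd (vscale t x) (vscale (1 - t) y)) <= t * f x + (1 - t) * f y.
Definition strongly_convex {n} (mu : R) (h : vec n -> R) : Prop :=
  forall x y t, 0 <= t <= 1 ->
    h (vadd (vscale t x) (vscale (1 - t) y))
      <= t * h x + (1 - t) * h y - mu / 2 * t * (1 - t) * (vnorm (vsub x y))^2.
Definition subgrad {n} (f : vec n -> R) (x g : vec n) : Prop :=
  forall y, f x + dot g (vsub y x) <= f y.

Definition is_argmin {n} (X : vec n -> Prop) (F : vec n -> R) (p : vec n) : Prop :=
  X p /\ forall y, X y -> F p <= F y.
Definition is_proj {n} (X : vec n -> Prop) (x p : vec n) : Prop :=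
  X p /\ forall y, X y -> vnorm (vsub x p) <= vnorm (vsub x y).

(* f = sum_{i=1}^m f_i, with the f_i given as fi 1, ..., fi m. *)
Definition fsum {n} (m : nat) (fi : nat -> vec n -> R) (x : vec n) : R :=
  \big[Rplus/0]_(0 <= i < m) fi i.+1 x.

(* The IR-IG iteration: xk k = x_k, xin k i = x_{k,i}, gf k i and gh k i are the
   chosen subgradients of f_{i+1} and h at x_{k,i}. *)
Definition IRIG {n} (X : vec n -> Prop) (m : nat) (fi : nat -> vec n -> R)
  (h : vec n -> R) (gamma lambda : nat -> R)
  (xk : nat -> vec n) (xin : nat -> nat -> vec n) (gf gh : nat -> nat -> vec n) : Prop :=
  X (xk 0%nat) /\
  forall k, xin k 0%nat = xk k /\
    (forall i, (i < m)%nat ->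
       subgrad (fi i.+1) (xin k i) (gf k i) /\
       subgrad h (xin k i) (gh k i) /\
       is_proj X
         (vsub (xin k i)
               (vscale (gamma k) (vadd (gf k i) (vscale (lambda k / INR m) (gh k i)))))
         (xin k i.+1)) /\
    xk k.+1 = xin k m.

Definition assumption_A2 (m : nat) (mu : R) (gamma lambda : nat -> R) : Prop :=
  (forall k, 0 < gamma k /\ 0 < lambda k) /\
  (forall k, gamma k.+1 <= gamma k /\ lambda k.+1 <= lambda k) /\
  gamma 0%nat * lambda 0%nat <= 2 * INR m / mu /\
  cv_infty (fun N => sum_f_R0 (fun k => gamma k * lambda k) N) /\
  (* (c)  sum over k >= 1 *)
  (exists l, Un_cv (fun N => sum_f_R0 (fun k =>
      / (gamma k.+1 * lambda k.+1) * (lambda k / lambda k.+1 - 1)^2) N) l) /\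
  (exists l, Un_cv (fun N => sum_f_R0 (fun k => (gamma k)^2) N) l) /\
  (* (e)  indexed from k >= 1 *)
  Un_cv (fun k => / ((gamma k.+1)^2 * (lambda k.+1)^2) * (lambda k / lambda k.+1 - 1)^2) 0 /\
  Un_cv (fun k => gamma k / lambda k) 0.

(* Main.v *)
From HB Require Import structures.
Require Import Defs.
From mathcomp Require Import ssreflect ssrfun ssrbool eqtype ssrnat seq fintype bigop.
From Stdlib Require Import Reals Lra Psatz ZArith FunctionalExtensionality ClassicalEpsilon Classical.
Open Scope R_scope.

Lemma Rplus_assoc' : associative Rplus. Proof. by move=> a b c; rewrite Rplus_assoc. Qed.
HB.instance Definition _ := Monoid.isComLaw.Build R 0 Rplus Rplus_assoc' Rplus_comm Rplus_0_l.

Section V.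
Context {n : nat}.
Implicit Types x y z : vec n.

Lemma sum_scal (c : R) (F : 'I_n -> R) :
  \big[Rplus/0]_(i < n) (c * F i) = c * \big[Rplus/0]_(i < n) F i.
Proof.
apply: (big_ind2 (fun u v => u = c * v)) => //; first by rewrite Rmult_0_r.
by move=> a b u v -> ->; rewrite Rmult_plus_distr_l.
Qed.

Lemma dotC x y : dot x y = dot y x.
Proof. by apply: eq_bigr => i _; rewrite Rmult_comm. Qed.

Lemma dotDl x y z : dot (vadd x y) z = dot x z + dot y z.
Proof. rewrite /dot -big_split; apply: eq_bigr => i _; rewrite /vadd /=; ring. Qed.

Lemma dotZl a x y : dot (vscale a x) y = a * dot x y.
Proof. rewrite /dot -sum_scal; apply: eq_bigr => i _; rewrite /vscale; ring. Qed.

Lemma dotBl x y z : dot (vsub x y) z = dot x z - dot y z.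
Proof.
have -> : vsub x y = vadd x (vscale (-1) y).
  by apply: functional_extensionality => i; rewrite /vsub /vadd /vscale; ring.
rewrite dotDl dotZl; ring.
Qed.

Lemma dotDr x y z : dot z (vadd x y) = dot z x + dot z y.
Proof. by rewrite (dotC z) dotDl (dotC x z) (dotC y z). Qed.
Lemma dotBr x y z : dot z (vsub x y) = dot z x - dot z y.
Proof. by rewrite (dotC z) dotBl (dotC x z) (dotC y z). Qed.
Lemma dotZr a x y : dot y (vscale a x) = a * dot y x.
Proof. by rewrite (dotC y) dotZl (dotC x y). Qed.

Lemma dot_ge0 x : 0 <= dot x x.
Proof.
rewrite /dot; elim/big_ind: _ => [|a b Ha Hb|i _]; [lra|lra|apply: Rle_0_sqr].
Qed.

Lemma coord_sq x (i : 'I_n) : x i * x i <= dot x x.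
Proof.
rewrite /dot (bigD1 i) //=.
match goal with |- _ <= _ + ?s => have : 0 <= s end.
  elim/big_ind: _ => [|a b Ha Hb|j _]; [lra|lra|apply: Rle_0_sqr].
lra.
Qed.

Lemma vnorm_ge0 x : 0 <= vnorm x.
Proof. exact: sqrt_pos. Qed.

Lemma vnorm_sq x : vnorm x * vnorm x = dot x x.
Proof. by rewrite /vnorm sqrt_sqrt //; apply: dot_ge0. Qed.

Lemma coord_le x (i : 'I_n) : Rabs (x i) <= vnorm x.
Proof.
rewrite /vnorm -sqrt_Rsqr_abs; apply: sqrt_le_1_alt.
rewrite /Rsqr; exact: coord_sq.
Qed.

Lemma dot_sub_sub x y : dot (vsub x y) (vsub x y) = dot x x - 2 * dot x y + dot y y.
Proof. rewrite !dotBl !dotBr (dotC y x); ring. Qed.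

Lemma dot_add_add x y : dot (vadd x y) (vadd x y) = dot x x + 2 * dot x y + dot y y.
Proof. rewrite !dotDl !dotDr (dotC y x); ring. Qed.

Lemma CS_sq x y : dot x y * dot x y <= dot x x * dot y y.
Proof.
set A := dot x x; set B := dot x y; set C := dot y y.
have H : forall t, 0 <= A - 2 * t * B + t * t * C.
  move=> t; have := dot_ge0 (vsub x (vscale t y)).
  rewrite dot_sub_sub dotZr dotZl dotZr -/A -/B -/C; lra.
have HC : 0 <= C by apply: dot_ge0.
have HA : 0 <= A by apply: dot_ge0.
case: (Req_dec C 0) => HC0.
  case: (Req_dec B 0) => HB0.
    rewrite HB0 HC0; lra.
  have := H ((A + 1) / (2 * B)). rewrite HC0.
  have -> : A - 2 * ((A + 1) / (2 * B)) * B + (A + 1) / (2 * B) * ((A + 1) / (2 * B)) * 0 = -1.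
    by field.
  lra.
have HCp : 0 < C by lra.
have := H (B / C).
have -> : A - 2 * (B / C) * B + B / C * (B / C) * C = (A * C - B * B) / C by field.
move=> HH.
have : 0 <= (A * C - B * B) / C * C by apply: Rmult_le_pos; lra.
have -> : (A * C - B * B) / C * C = A * C - B * B by field.
lra.
Qed.

Lemma CS x y : Rabs (dot x y) <= vnorm x * vnorm y.
Proof.
rewrite /vnorm -sqrt_mult; try apply: dot_ge0.
rewrite -sqrt_Rsqr_abs; apply: sqrt_le_1_alt; rewrite /Rsqr; exact: CS_sq.
Qed.

Lemma dot_le x y : dot x y <= vnorm x * vnorm y.
Proof. have := CS x y; have := Rle_abs (dot x y); lra. Qed.

Lemma vnorm_add x y : vnorm (vadd x y) <= vnorm x + vnorm y.
Proof.
have h1 := vnorm_ge0 x; have h2 := vnorm_ge0 y; have h3 := vnorm_ge0 (vadd x y).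
apply: Rsqr_incr_0_var; last by lra.
rewrite /Rsqr vnorm_sq dot_add_add -(vnorm_sq x) -(vnorm_sq y).
have := dot_le x y; nra.
Qed.

Lemma vsub_split x y z : vsub x z = vadd (vsub x y) (vsub y z).
Proof. apply: functional_extensionality => i; rewrite /vsub /vadd; ring. Qed.

Lemma vnorm_tri x y z : vnorm (vsub x z) <= vnorm (vsub x y) + vnorm (vsub y z).
Proof. by rewrite (vsub_split x y z); apply: vnorm_add. Qed.

Lemma vnorm_subC x y : vnorm (vsub x y) = vnorm (vsub y x).
Proof.
rewrite /vnorm; congr sqrt; rewrite !dot_sub_sub (dotC y x); ring.
Qed.

Lemma vnorm_scale a x : vnorm (vscale a x) = Rabs a * vnorm x.
Proof.
rewrite /vnorm dotZl dotZr -Rmult_assoc sqrt_mult; [|nra|apply: dot_ge0].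
by change (a * a) with (Rsqr a); rewrite sqrt_Rsqr_abs.
Qed.

Lemma vnorm_sub_le x y : vnorm (vsub x y) <= vnorm x + vnorm y.
Proof.
have -> : vsub x y = vadd x (vscale (-1) y).
  by apply: functional_extensionality => i; rewrite /vsub /vadd /vscale; ring.
rewrite -[vnorm y]Rmult_1_l -[1]Rabs_R1 -Rabs_Ropp -vnorm_scale; exact: vnorm_add.
Qed.

Lemma vnorm0_eq x : vnorm x = 0 -> x = (fun _ => 0).
Proof.
move=> H; apply: functional_extensionality => i.
have := coord_le x i; rewrite H => H'.
have H1 := Rle_abs (x i); have H2 := Rle_abs (- x i); rewrite Rabs_Ropp in H2; lra.
Qed.

End V.

Definition cmb {n} (t : R) (x y : vec n) : vec n := vadd (vscale t x) (vscale (1 - t) y).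

Lemma lim_t_lemma (Q c : R) : (forall t, 0 < t <= 1 -> 0 <= Q + t * c) -> 0 <= Q.
Proof.
move=> H; apply: Rnot_lt_le => HQ.
set t := Rmin 1 (- Q / (2 * (Rabs c + 1))).
have Hc := Rabs_pos c.
have Ht1 : t <= 1 by apply: Rmin_l.
have Ht2 : t <= - Q / (2 * (Rabs c + 1)) by apply: Rmin_r.
have Ht0 : 0 < t.
  rewrite /t; apply: Rmin_glb_lt; first lra.
  apply: Rdiv_lt_0_compat; lra.
have := H t (conj Ht0 Ht1).
have Hc1 : t * c <= t * Rabs c by apply: Rmult_le_compat_l; [lra|apply: Rle_abs].
have Ht3 : t * (2 * (Rabs c + 1)) <= - Q.
  have -> : - Q = (- Q / (2 * (Rabs c + 1))) * (2 * (Rabs c + 1)) by field; lra.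
  apply: Rmult_le_compat_r; lra.
nra.
Qed.

Section W.
Context {n : nat}.
Implicit Types x y z : vec n.

Lemma vnorm_pow2 x : vnorm x ^ 2 = dot x x.
Proof. by rewrite /= Rmult_1_r vnorm_sq. Qed.

Lemma sq_le_of_le a b : 0 <= a -> a <= b -> a * a <= b * b.
Proof. move=> *; nra. Qed.

Lemma vnorm_le_sq x y : vnorm x <= vnorm y -> dot x x <= dot y y.
Proof. move=> H; rewrite -!vnorm_sq; apply: sq_le_of_le => //; exact: vnorm_ge0. Qed.

Lemma vnorm_le_of_sq x (c : R) : 0 <= c -> dot x x <= c * c -> vnorm x <= c.
Proof.
move=> Hc H; have := vnorm_ge0 x => H0; rewrite -vnorm_sq in H.
apply: Rnot_lt_le => Hlt; nra.
Qed.

Lemma strong_subgrad (mu : R) (h : vec n -> R) x s :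
  0 < mu -> strongly_convex mu h -> subgrad h x s ->
  forall y, h x + dot s (vsub y x) + mu / 2 * dot (vsub y x) (vsub y x) <= h y.
Proof.
move=> Hmu Hh Hs y.
set v := vsub y x; set N := dot v v; set B := dot s v.
suff : 0 <= h y - h x - B - mu / 2 * N by lra.
apply: (lim_t_lemma _ (mu / 2 * N)) => t [Ht0 Ht1].
have E : vsub (cmb t y x) x = vscale t v.
  by apply: functional_extensionality => i; rewrite /cmb /vsub /vadd /vscale /v /vsub; ring.
have H1 := Hs (cmb t y x); rewrite E dotZr -/B in H1.
have H2 := Hh y x t (conj (Rlt_le _ _ Ht0) Ht1).
rewrite vnorm_pow2 -/v -/N in H2; rewrite /cmb in H1.
have H3 : t * B <= t * (h y - h x) - mu / 2 * t * (1 - t) * N by lra.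
have H4 : 0 <= t * (h y - h x - B - mu / 2 * N + t * (mu / 2 * N)) by nra.
apply: (Rmult_le_reg_l t); first lra.
by rewrite Rmult_0_r.
Qed.

Lemma proj_vi (X : vec n -> Prop) z p y :
  convex_set X -> is_proj X z p -> X y -> dot (vsub z p) (vsub y p) <= 0.
Proof.
move=> HX [Hp Hmin] Hy.
set u := vsub z p; set v := vsub y p; set B := dot u v; set C := dot v v.
suff : 0 <= - 2 * B by lra.
apply: (lim_t_lemma _ C) => t [Ht0 Ht1].
have Hw := HX y p t Hy Hp (conj (Rlt_le _ _ Ht0) Ht1).
have E : vsub z (vadd (vscale t y) (vscale (1 - t) p)) = vsub u (vscale t v).
  by apply: functional_extensionality => i; rewrite /u /v /vsub /vadd /vscale; ring.
have := vnorm_le_sq _ _ (Hmin _ Hw); rewrite E (dot_sub_sub u) dotZr dotZl dotZr -/B -/C -/u.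
nra.
Qed.

Lemma proj_nonexp (X : vec n -> Prop) z p y :
  convex_set X -> is_proj X z p -> X y ->
  dot (vsub p y) (vsub p y) <= dot (vsub z y) (vsub z y).
Proof.
move=> HX Hp Hy; have H := proj_vi _ _ _ _ HX Hp Hy.
rewrite (vsub_split z p y) dot_add_add.
have : dot (vsub z p) (vsub p y) = - dot (vsub z p) (vsub y p) by rewrite !dotBr; ring.
have := dot_ge0 (vsub z p). lra.
Qed.

End W.

Section Cube.
Context {n : nat}.
Implicit Types x y z : vec n.

Definition upd x (j : nat) (v : R) : vec n := fun i => if nat_of_ord i == j then v else x i.

Lemma cube_A (f : vec n -> R) (r : R) : convex_fun f -> 0 < r ->
  forall (j : nat) x, (forall i, Rabs (x i) <= r) ->
  exists y, (forall i, Rabs (y i) <= r) /\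
    (forall i : 'I_n, (i < j)%nat -> y i = r \/ y i = - r) /\ f x <= f y.
Proof.
move=> Hf Hr j; elim: j => [|j IH] x Hx.
  exists x; split; [exact: Hx | split; [by move=> i; rewrite ltn0 | lra]].
have [y [Hy [Hyj Hfy]]] := IH x Hx.
case: (ltnP j n) => Hjn; last first.
  exists y; split => //; split => // i Hi; apply: Hyj.
  by apply: (leq_trans (ltn_ord i)).
set J : 'I_n := Ordinal Hjn.
set yp := upd y j r; set ym := upd y j (- r).
set t := (y J + r) / (2 * r).
have HyJ : Rabs (y J) <= r := Hy J.
have HyJ' : - r <= y J <= r.
  have H1 := Rle_abs (y J); have H2 := Rle_abs (- y J); rewrite Rabs_Ropp in H2; lra.
have Ht : 0 <= t <= 1.
  rewrite /t; split.
    apply: Rmult_le_pos; [lra|]; apply: Rlt_le; apply: Rinv_0_lt_compat; lra.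
  apply: (Rmult_le_reg_r (2 * r)); first lra.
  rewrite /Rdiv Rmult_assoc Rinv_l; lra.
have Ey : y = cmb t yp ym.
  apply: functional_extensionality => i.
  rewrite /cmb /vadd /vscale /yp /ym /upd.
  case: eqP => Hij.
    have -> : i = J by apply: val_inj.
    rewrite /t; field; lra.
  ring.
have Hc := Hf yp ym t Ht.
rewrite -/(cmb t yp ym) -Ey in Hc.
have Hbnd : forall v, Rabs v <= r -> forall i, Rabs (upd y j v i) <= r.
  by move=> v Hv i; rewrite /upd; case: eqP.
have Hcoord : forall v, (v = r \/ v = - r) -> forall i : 'I_n, (i < j.+1)%nat ->
    upd y j v i = r \/ upd y j v i = - r.
  move=> v Hv i Hi; rewrite /upd; case: eqP => Hij //.
  apply: Hyj; rewrite ltnS leq_eqVlt in Hi.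
  by case/orP: Hi => // /eqP.
have Hr' : Rabs r <= r by rewrite Rabs_right; lra.
have Hr'' : Rabs (- r) <= r by rewrite Rabs_Ropp Rabs_right; lra.
case: (Rle_lt_dec (f ym) (f yp)) => Hcmp.
  exists yp; split; first exact: Hbnd.
  split; first by apply: Hcoord; left.
  nra.
exists ym; split; first exact: Hbnd.
split; first by apply: Hcoord; right.
nra.
Qed.

Lemma cube_B (r : R) : forall (j : nat) (g : vec n -> R), exists M, forall y,
  (forall i : 'I_n, (i < j)%nat -> y i = r \/ y i = - r) ->
  (forall i : 'I_n, (j <= i)%nat -> y i = 0) -> g y <= M.
Proof.
elim=> [|j IH] g.
  exists (g (fun _ => 0)) => y _ H0.
  have -> : y = (fun _ => 0) by apply: functional_extensionality => i; apply: H0.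
  lra.
have [M HM] := IH (fun y => Rmax (g (upd y j r)) (g (upd y j (- r)))).
exists M => y Hy H0.
set y' := upd y j 0.
have Hy' : g y <= Rmax (g (upd y' j r)) (g (upd y' j (- r))).
  case: (classic (forall i : 'I_n, nat_of_ord i = j -> y i = r)) => Hc.
    have -> : upd y' j r = y.
      apply: functional_extensionality => i; rewrite /upd /y' /upd.
      by case: eqP => // /Hc ->.
    exact: Rmax_l.
  have [i0 Hi0] : exists i0 : 'I_n, nat_of_ord i0 = j /\ y i0 <> r.
    apply: NNPP => Hn; apply: Hc => i Hi; apply: NNPP => Hy0; apply: Hn; by exists i.
  have -> : upd y' j (- r) = y.
    apply: functional_extensionality => i; rewrite /upd /y' /upd.
    case: eqP => // Hij.
    have -> : i = i0 by apply: val_inj; rewrite /= Hij; case: Hi0.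
    case: Hi0 => Hi0a Hi0b.
    have : (i0 < j.+1)%nat by rewrite Hi0a.
    by move/Hy => [|] //.
  exact: Rmax_r.
apply: (Rle_trans _ _ _ Hy'); apply: HM.
  move=> i Hi; rewrite /y' /upd; case: eqP => Hij.
    by move: Hi; rewrite Hij ltnn.
  by apply: Hy; apply: ltnW.
move=> i Hi; rewrite /y' /upd; case: eqP => Hij //.
apply: H0; rewrite ltn_neqAle Hi andbT; apply/eqP => E; apply: Hij; by rewrite E.
Qed.

Lemma convex_cube_bnd (f : vec n -> R) (r : R) : convex_fun f -> 0 < r ->
  exists K, forall x, (forall i, Rabs (x i) <= r) -> Rabs (f x) <= K.
Proof.
move=> Hf Hr.
have [M HM] := cube_B r n f.
have Hub : forall x, (forall i, Rabs (x i) <= r) -> f x <= M.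
  move=> x Hx; have [y [_ [Hy Hfy]]] := cube_A f r Hf Hr n x Hx.
  apply: (Rle_trans _ _ _ Hfy); apply: HM.
    by move=> i _; apply: Hy.
  by move=> i; rewrite leqNgt ltn_ord.
have H0 : forall i, Rabs ((fun _ : 'I_n => 0) i) <= r by move=> i; rewrite Rabs_R0; lra.
exists (Rmax M (M - 2 * f (fun _ => 0))) => x Hx.
have Hnx : forall i, Rabs (vscale (-1) x i) <= r.
  by move=> i; rewrite /vscale -Ropp_mult_distr_l Rmult_1_l Rabs_Ropp.
have Hc := Hf x (vscale (-1) x) (1/2) ltac:(lra).
have E : vadd (vscale (1 / 2) x) (vscale (1 - 1 / 2) (vscale (-1) x)) = (fun _ => 0).
  by apply: functional_extensionality => i; rewrite /vadd /vscale; field.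
rewrite E in Hc.
have H1 := Hub x Hx; have H2 := Hub _ Hnx.
apply: Rabs_le; split.
  have := Rmax_r M (M - 2 * f (fun _ => 0)); lra.
have := Rmax_l M (M - 2 * f (fun _ => 0)); lra.
Qed.

Lemma convex_ball_bnd (f : vec n -> R) (r : R) : convex_fun f ->
  exists K, 0 <= K /\ forall x, vnorm x <= r -> Rabs (f x) <= K.
Proof.
move=> Hf.
have [K HK] := convex_cube_bnd f (Rabs r + 1) Hf ltac:(have := Rabs_pos r; lra).
exists (Rmax K 0); split; first exact: Rmax_r.
move=> x Hx; apply: (Rle_trans _ _ _ _ (Rmax_l _ _)); apply: HK => i.
have := coord_le x i; have := Rle_abs r; lra.
Qed.

Lemma lipschitz_of_bnd (f : vec n -> R) (r K : R) : convex_fun f -> 0 <= K ->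
  (forall x, vnorm x <= r + 1 -> Rabs (f x) <= K) ->
  forall a b, vnorm a <= r -> vnorm b <= r -> f b - f a <= 2 * K * vnorm (vsub b a).
Proof.
move=> Hf HK Hb a b Ha Hbb.
set d := vnorm (vsub b a).
have Hd0 : 0 <= d by apply: vnorm_ge0.
case: (Req_dec d 0) => Hd.
  have E := vnorm0_eq _ Hd.
  have -> : b = a.
    apply: functional_extensionality => i.
    have := f_equal (fun v => v i) E; rewrite /vsub /=; lra.
  rewrite Hd; lra.
have Hdp : 0 < d by lra.
set c := vadd b (vscale (/ d) (vsub b a)).
have Hc : vnorm c <= r + 1.
  apply: (Rle_trans _ _ _ (vnorm_add _ _)).
  rewrite vnorm_scale Rabs_right; last by apply: Rle_ge; apply: Rlt_le; apply: Rinv_0_lt_compat.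
  rewrite -/d Rinv_l //; lra.
set t := d / (1 + d).
have Ht : 0 <= t <= 1.
  rewrite /t; split; first by apply: Rmult_le_pos; [lra|]; apply: Rlt_le; apply: Rinv_0_lt_compat; lra.
  apply: (Rmult_le_reg_r (1 + d)); first lra.
  rewrite /Rdiv Rmult_assoc Rinv_l; lra.
have E : vadd (vscale t c) (vscale (1 - t) a) = b.
  apply: functional_extensionality => i; rewrite /vadd /vscale /c /t /vadd /vscale /vsub.
  field; lra.
have Hcv := Hf c a t Ht; rewrite E in Hcv.
have Hfc := Hb c Hc.
have Hfa := Hb a ltac:(lra).
have Htd : t <= d.
  rewrite /t; apply: (Rmult_le_reg_r (1 + d)); first lra.
  rewrite /Rdiv Rmult_assoc Rinv_l; nra.
have H1 := Rle_abs (f c); have H2 := Rle_abs (- f a); rewrite Rabs_Ropp in H2.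
nra.
Qed.

Lemma subgrad_bnd (f : vec n -> R) (r K : R) x g : 0 <= K ->
  (forall x, vnorm x <= r + 1 -> Rabs (f x) <= K) -> vnorm x <= r ->
  subgrad f x g -> vnorm g <= 2 * K.
Proof.
move=> HK Hb Hx Hg.
set d := vnorm g.
have Hd0 : 0 <= d by apply: vnorm_ge0.
case: (Req_dec d 0) => Hd; first lra.
have Hdp : 0 < d by lra.
set y := vadd x (vscale (/ d) g).
have Hy : vnorm y <= r + 1.
  apply: (Rle_trans _ _ _ (vnorm_add _ _)).
  rewrite vnorm_scale Rabs_right; last by apply: Rle_ge; apply: Rlt_le; apply: Rinv_0_lt_compat.
  rewrite -/d Rinv_l //; lra.
have E : vsub y x = vscale (/ d) g.
  by apply: functional_extensionality => i; rewrite /y /vsub /vadd /vscale; ring.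
have H := Hg y; rewrite E dotZr -vnorm_sq -/d in H.
replace (/ d * (d * d)) with d in H by (field; lra).
have H1 := Hb y Hy; have H2 := Hb x ltac:(lra).
have H3 := Rle_abs (f y); have H4 := Rle_abs (- f x); rewrite Rabs_Ropp in H4.
lra.
Qed.

End Cube.

Fixpoint ps (u : nat -> R) (k : nat) : R :=
  match k with O => 0 | S k' => ps u k' + u k' end.

Lemma ps_sum u N : ps u (S N) = sum_f_R0 u N.
Proof. elim: N => [|N IH] /=; first ring. by rewrite -IH /=. Qed.

Lemma ps_ge0 u : (forall k, 0 <= u k) -> forall k, 0 <= ps u k.
Proof. move=> H; elim=> [|k IH] /=; [lra|have := H k; lra]. Qed.

Lemma ps_mono u : (forall k, 0 <= u k) -> forall k p, ps u k <= ps u (k + p).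
Proof.
move=> H k; elim=> [|p IH]; first by rewrite addn0; lra.
rewrite addnS /=; have := H (k + p)%nat; lra.
Qed.

Lemma ps_cv u l : Un_cv (sum_f_R0 u) l -> Un_cv (ps u) l.
Proof.
move=> H eps Heps; have [N HN] := H eps Heps.
exists (S N) => k Hk.
have -> : k = S (Nat.pred k) by lia.
rewrite ps_sum; apply: HN; lia.
Qed.

Lemma ps_le_lim u l : (forall k, 0 <= u k) -> Un_cv (ps u) l -> forall k, ps u k <= l.
Proof.
move=> H Hc k; apply: growing_ineq => // j /=; have := H j; lra.
Qed.

Lemma polyak (a b c : nat -> R) (l : R) :
  (forall k, 0 <= a k) -> (forall k, 0 <= b k) -> (forall k, 0 <= c k) ->
  (forall k, a (S k) <= (1 - b k) * a k + c k) ->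
  cv_infty (sum_f_R0 b) -> Un_cv (sum_f_R0 c) l -> Un_cv a 0.
Proof.
move=> Ha Hb Hc Hrec Hbinf Hcl.
have Hpc := ps_cv _ _ Hcl.
have Hcle := ps_le_lim _ _ Hc Hpc.
have Hc0 := ps_ge0 _ Hc.
have T1 : forall K p, a (K + p)%nat <= a K + (ps c (K + p) - ps c K).
  move=> K; elim=> [|p IH]; first by rewrite addn0; lra.
  rewrite addnS /=; have := Hrec (K + p)%nat; have := Ha (K + p)%nat; have := Hb (K + p)%nat.
  move=> *; nra.
have T2 : forall eps K, (forall j, (K <= j)%nat -> eps <= a j) -> forall p,
    a (K + p)%nat <= a K + (ps c (K + p) - ps c K) - eps * (ps b (K + p) - ps b K).
  move=> eps K HK; elim=> [|p IH]; first by rewrite addn0; lra.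
  rewrite addnS /=; have := Hrec (K + p)%nat; have := HK (K + p)%nat (leq_addr _ _).
  have := Hb (K + p)%nat => *; nra.
have Claim1 : forall eps, 0 < eps -> forall K, exists k, (K <= k)%nat /\ a k < eps.
  move=> eps Heps K; apply: NNPP => Hn.
  have HK : forall j, (K <= j)%nat -> eps <= a j.
    move=> j Hj; apply: Rnot_lt_le => Hlt; apply: Hn; by exists j.
  have [N HN] := Hbinf (ps b K + (a K + l + 1) / eps).
  set N' := maxn N K.
  have HN' := HN N' ltac:(apply/leP; apply: leq_maxl).
  have HKN : (K <= S N')%nat by apply: leqW; apply: leq_maxr.
  have E : S N' = (K + (S N' - K))%nat by rewrite subnKC.
  have := T2 eps K HK (S N' - K)%nat; rewrite -E ps_sum.
  have := Ha (S N'); have := Hcle (S N'); have := Hc0 K.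
  move=> H1 H2 H3 H4.
  have H5 : eps * ((a K + l + 1) / eps) = a K + l + 1 by field; lra.
  have H6 : eps * ((a K + l + 1) / eps) < eps * (sum_f_R0 b N' - ps b K).
    apply: Rmult_lt_compat_l => //; lra.
  rewrite ?ps_sum in H2 H4; lra.
have Claim2 : forall eps, 0 < eps -> exists K, forall k p, (K <= k)%nat ->
    ps c (k + p) - ps c k < eps.
  move=> eps Heps; have [K HK] := Hpc eps Heps.
  exists K => k p Hk; have := HK k ltac:(apply/leP; exact Hk); rewrite /R_dist.
  have := Hcle (k + p)%nat; move=> H1 H2.
  have := Rle_abs (ps c k - l); have := Rle_abs (- (ps c k - l)); rewrite Rabs_Ropp; lra.
move=> eps Heps.
have [K HK] := Claim2 (eps / 2) ltac:(lra).
have [k0 [Hk0 Hak0]] := Claim1 (eps / 2) ltac:(lra) K.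
exists k0 => j Hj; move/leP: Hj => Hj.
have E : j = (k0 + (j - k0))%nat by rewrite subnKC.
rewrite /R_dist Rminus_0_r Rabs_right; last by apply: Rle_ge.
rewrite E; have := T1 k0 (j - k0)%nat; have := HK k0 (j - k0)%nat Hk0; lra.
Qed.

Lemma geP' (a b : nat) : (a <= b)%nat -> (b >= a)%coq_nat.
Proof. by move/leP. Qed.

Lemma arch (r : R) : exists N : nat, r < INR N.
Proof.
case: (Rlt_or_le r 0) => Hr; first by exists 0%nat; rewrite /=; lra.
have [H1 H2] := archimed r.
have Hz : (0 <= up r)%Z by apply: le_IZR; lra.
exists (Z.to_nat (up r)); rewrite INR_IZR_INZ Z2Nat.id //; lra.
Qed.

Lemma le_of_cv (A B : R) (u : nat -> R) : Un_cv u 0 -> (forall k, A <= B + u k) -> A <= B.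
Proof.
move=> Hu H; apply: Rnot_lt_le => Hlt.
have [N HN] := Hu (A - B) ltac:(lra).
have := HN N (le_n _); rewrite /R_dist Rminus_0_r => H1.
have := H N; have := Rle_abs (u N); lra.
Qed.

Lemma le_of_cv_ev (A B : R) (u : nat -> R) (K : nat) : Un_cv u 0 ->
  (forall k, (K <= k)%nat -> A <= B + u k) -> A <= B.
Proof.
move=> Hu H; apply: Rnot_lt_le => Hlt.
have [N HN] := Hu (A - B) ltac:(lra).
have := HN (maxn N K) ltac:(apply/leP; apply: leq_maxl); rewrite /R_dist Rminus_0_r => H1.
have := H (maxn N K) (leq_maxr _ _); have := Rle_abs (u (maxn N K)); lra.
Qed.

Lemma cv_inv_S : Un_cv (fun k => / (INR k + 1)) 0.
Proof.
move=> eps Heps; have [N HN] := arch (/ eps).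
exists N => k Hk; rewrite /R_dist Rminus_0_r.
have Hk' : INR N <= INR k by apply: le_INR.
have HN0 : 0 < / eps by apply: Rinv_0_lt_compat.
have Hpos : 0 < INR k + 1 by have := pos_INR k; lra.
rewrite Rabs_right; last by apply: Rle_ge; apply: Rlt_le; apply: Rinv_0_lt_compat.
rewrite -(Rinv_inv eps); apply: Rinv_lt_contravar; first by apply: Rmult_lt_0_compat.
lra.
Qed.

Lemma cv_scal (u : nat -> R) (c : R) : Un_cv u 0 -> Un_cv (fun k => c * u k) 0.
Proof.
move=> Hu.
have Hc : Un_cv (fun _ => c) c.
  by move=> e He; exists 0%nat => k _; rewrite /Rdist Rminus_diag Rabs_R0; lra.
have := CV_mult _ _ _ _ Hc Hu; by rewrite Rmult_0_r.
Qed.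

Lemma cv_add0 (u v : nat -> R) : Un_cv u 0 -> Un_cv v 0 -> Un_cv (fun k => u k + v k) 0.
Proof. move=> Hu Hv; have := CV_plus _ _ _ _ Hu Hv; by rewrite Rplus_0_r. Qed.

Lemma cv_shift (u : nat -> R) l : Un_cv (fun k => u (S k)) l -> Un_cv u l.
Proof.
move=> H eps Heps; have [N HN] := H eps Heps; exists (S N) => k Hk.
have -> : k = S (Nat.pred k) by lia.
apply: HN; lia.
Qed.

Lemma cv_sqrt0 (u : nat -> R) : (forall k, 0 <= u k) -> Un_cv (fun k => u k * u k) 0 -> Un_cv u 0.
Proof.
move=> H0 H eps Heps; have [N HN] := H (eps * eps) ltac:(nra).
exists N => k Hk; have := HN k Hk; rewrite /R_dist !Rminus_0_r !Rabs_right; try (apply: Rle_ge; nra).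
  move=> Hl; apply: Rnot_le_lt => Hle; have := H0 k; nra.
by apply: Rle_ge.
Qed.

Lemma cv_squeeze0 (u v : nat -> R) : (forall k, 0 <= u k <= v k) -> Un_cv v 0 -> Un_cv u 0.
Proof.
move=> H Hv eps Heps; have [N HN] := Hv eps Heps; exists N => k Hk.
have := HN k Hk; have := H k; rewrite /R_dist !Rminus_0_r.
move=> [H1 H2]; rewrite !Rabs_right; try lra.
Qed.

Section Compl.
Context {n : nat}.

Lemma sum_le_const (F : 'I_n -> R) (c : R) : (forall i, F i <= c) ->
  \big[Rplus/0]_(i < n) F i <= INR n * c.
Proof.
move=> H.
have H1 : \big[Rplus/0]_(i < n) F i <= \big[Rplus/0]_(i < n) c.
  elim/big_ind2: _ => [|a b a' b' Ha Hb|i _]; [lra|lra|exact: H].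
apply: (Rle_trans _ _ _ H1); rewrite big_const_ord.
elim: n {F H H1} => [|k IH]; first by rewrite /=; lra.
rewrite iterS S_INR; lra.
Qed.

Lemma uniform_N (P : nat -> 'I_n -> Prop) :
  (forall i, exists N, forall k, (N <= k)%nat -> P k i) ->
  exists N, forall i k, (N <= k)%nat -> P k i.
Proof.
move=> H.
suff : forall j : nat, exists N, forall i : 'I_n, (i < j)%nat -> forall k, (N <= k)%nat -> P k i.
  move=> /(_ n) [N HN]; exists N => i k Hk; exact: HN (ltn_ord i) k Hk.
elim=> [|j [N IH]]; first by exists 0%nat => i; rewrite ltn0.
case: (ltnP j n) => Hjn; last first.
  exists N => i Hi; apply: IH; exact: (leq_trans (ltn_ord i) Hjn).
have [N' HN'] := H (Ordinal Hjn).
exists (maxn N N') => i Hi k Hk.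
rewrite ltnS leq_eqVlt in Hi; case/orP: Hi => Hi.
  have -> : i = Ordinal Hjn by apply: val_inj; apply/eqP.
  apply: HN'; exact: leq_trans (leq_maxr _ _) Hk.
apply: IH => //; exact: leq_trans (leq_maxl _ _) Hk.
Qed.

Lemma vec_complete (u : nat -> vec n) :
  (forall eps, 0 < eps -> exists N, forall j k, (N <= j)%nat -> (N <= k)%nat ->
     vnorm (vsub (u j) (u k)) < eps) ->
  exists l, Un_cv (fun k => vnorm (vsub (u k) l)) 0.
Proof.
move=> HC.
have HCi : forall i, Cauchy_crit (fun k => u k i).
  move=> i eps Heps; have [N HN] := HC eps Heps; exists N => j k Hj Hk.
  rewrite /R_dist; apply: Rle_lt_trans (coord_le (vsub (u j) (u k)) i) _.
  apply: HN; by apply/leP.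
set l := fun i => proj1_sig (R_complete _ (HCi i)).
have Hl : forall i, Un_cv (fun k => u k i) (l i) by move=> i; rewrite /l; case: (R_complete _ _).
exists l => eps Heps.
set d := eps / (2 * (INR n + 1)).
have Hn0 := pos_INR n.
have Hd : 0 < d by apply: Rdiv_lt_0_compat; lra.
have [N HN] := uniform_N (fun k i => Rabs (u k i - l i) < d)
  (fun i => let: ex_intro N HN := Hl i d Hd in ex_intro _ N (fun k Hk => HN k (geP' _ _ Hk))).
exists N => k Hk; rewrite /R_dist Rminus_0_r Rabs_right; last by apply: Rle_ge; apply: vnorm_ge0.
apply: Rle_lt_trans (_ : eps / 2 < eps); last lra.
apply: vnorm_le_of_sq; first lra.
apply: Rle_trans (sum_le_const _ (d * d) _) _.
  move=> i; have := HN i k ltac:(apply/leP; exact: Hk); rewrite /vsub => Hi.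
  have H1 := Rle_abs (u k i - l i); have H2 := Rle_abs (- (u k i - l i)).
  rewrite Rabs_Ropp in H2; nra.
have Hde : eps / 2 = d * (INR n + 1) by rewrite /d; field; lra.
rewrite Hde; nra.
Qed.

End Compl.

Section Min.
Context {n : nat}.

Lemma exists_min (X : vec n -> Prop) (F : vec n -> R) (L nu lb : R) :
  Defs.closed_set X -> convex_set X -> (exists x, X x) -> 0 < nu ->
  (forall a b, X a -> X b -> F a - F b <= L * vnorm (vsub a b)) ->
  (forall a b, X a -> X b ->
     F (cmb (1/2) a b) <= F a / 2 + F b / 2 - nu * dot (vsub a b) (vsub a b)) ->
  (forall x, X x -> lb <= F x) ->
  exists z, is_argmin X F z.
Proof.
move=> Hcl Hcv [x0 Hx0] Hnu HL Hmid Hlb.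
set E := fun v => exists x, X x /\ v = - F x.
have HEb : bound E by exists (- lb) => v [x [Hx ->]]; have := Hlb x Hx; lra.
have HEne : exists v, E v by exists (- F x0), x0.
have [m [Hub Hleast]] := completeness E HEb HEne.
set I := - m.
have Hinf : forall x, X x -> I <= F x.
  move=> x Hx; have := Hub (- F x) (ex_intro _ x (conj Hx erefl)); rewrite /I; lra.
have Happ : forall k : nat, exists x, X x /\ F x < I + / (INR k + 1).
  move=> k; apply: NNPP => Hn.
  have Hk : 0 < / (INR k + 1) by apply: Rinv_0_lt_compat; have := pos_INR k; lra.
  have : m <= m - / (INR k + 1).
    apply: Hleast => v [x [Hx ->]].
    apply: Rnot_lt_le => Hlt; apply: Hn; exists x; split => //; rewrite /I; lra.
  lra.
set xs := fun k => proj1_sig (constructive_indefinite_description _ (Happ k)).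
have Hxs : forall k, X (xs k) /\ F (xs k) < I + / (INR k + 1).
  by move=> k; rewrite /xs; case: (constructive_indefinite_description _ _).
have Hcauchy : forall eps, 0 < eps -> exists N, forall j k, (N <= j)%nat -> (N <= k)%nat ->
     vnorm (vsub (xs j) (xs k)) < eps.
  move=> eps Heps.
  have [N0 HN0] := cv_inv_S (nu * ((eps / 2) * (eps / 2))) ltac:(apply: Rmult_lt_0_compat; nra).
  exists N0 => j k Hj Hk.
  have Hej : / (INR j + 1) < nu * ((eps / 2) * (eps / 2)).
    have := HN0 j ltac:(apply/leP; exact: Hj); rewrite /Rdist Rminus_0_r Rabs_right //.
    apply: Rle_ge; apply: Rlt_le; apply: Rinv_0_lt_compat; have := pos_INR j; lra.
  have Hek : / (INR k + 1) < nu * ((eps / 2) * (eps / 2)).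
    have := HN0 k ltac:(apply/leP; exact: Hk); rewrite /Rdist Rminus_0_r Rabs_right //.
    apply: Rle_ge; apply: Rlt_le; apply: Rinv_0_lt_compat; have := pos_INR k; lra.
  have [Xj Fj] := Hxs j; have [Xk Fk] := Hxs k.
  have Hm := Hmid _ _ Xj Xk.
  have Hmi := Hinf _ (Hcv (xs j) (xs k) (1/2) Xj Xk ltac:(lra)).
  rewrite -/(cmb (1/2) (xs j) (xs k)) in Hmi.
  apply: Rle_lt_trans (_ : eps / 2 < eps); last lra.
  apply: vnorm_le_of_sq; first lra.
  apply: Rnot_lt_le => Hlt.
  have : nu * ((eps / 2) * (eps / 2)) < nu * dot (vsub (xs j) (xs k)) (vsub (xs j) (xs k)).
    by apply: Rmult_lt_compat_l.
  lra.
have [z Hz] := vec_complete xs Hcauchy.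
have HXz : X z := Hcl xs z (fun k => proj1 (Hxs k)) Hz.
have HFz : F z <= I.
  apply: (le_of_cv _ _ (fun k => / (INR k + 1) + L * vnorm (vsub (xs k) z))).
    apply: cv_add0; [exact: cv_inv_S | exact: cv_scal].
  move=> k; have [Xk Fk] := Hxs k; have := HL _ _ HXz Xk.
  rewrite vnorm_subC; lra.
exists z; split => // y Hy; have := Hinf y Hy; lra.
Qed.

End Min.

Section Main.
Context (n m : nat) (X : vec n -> Prop) (fi : nat -> vec n -> R) (h : vec n -> R) (mu : R)
  (HXne : exists x, X x) (HXcpt : compact_set X) (HXcvx : convex_set X)
  (Hfi : forall i, (1 <= i <= m)%nat -> convex_fun (fi i))
  (Hmu : 0 < mu) (Hh : strongly_convex mu h)
  (gamma lambda : nat -> R) (HA2 : assumption_A2 m mu gamma lambda)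
  (xk : nat -> vec n) (xin : nat -> nat -> vec n) (gf gh : nat -> nat -> vec n)
  (Hit : IRIG X m fi h gamma lambda xk xin gf gh).

Lemma Hpos k : 0 < gamma k /\ 0 < lambda k.
Proof. by case: HA2 => H _; apply: H. Qed.

Lemma Hmono k : gamma k.+1 <= gamma k /\ lambda k.+1 <= lambda k.
Proof. by case: HA2 => _ [H _]; apply: H. Qed.

Lemma Hlam0 k : lambda k <= lambda 0%nat.
Proof. elim: k => [|k IH]; first lra. have := Hmono k; lra. Qed.

Lemma Hgam0 k : gamma k <= gamma 0%nat.
Proof. elim: k => [|k IH]; first lra. have := Hmono k; lra. Qed.

Lemma Hm_pos : (0 < m)%nat.
Proof.
case: HA2 => _ [_ [H _]].
rewrite lt0n; apply/eqP => Hm0; rewrite Hm0 /= Rmult_0_r /Rdiv Rmult_0_l in H.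
have [H1 H2] := Hpos 0%nat.
have : 0 < gamma 0%nat * lambda 0%nat by apply: Rmult_lt_0_compat.
lra.
Qed.

Lemma HmR : 1 <= INR m.
Proof. have := Hm_pos; rewrite -(prednK Hm_pos) => _; rewrite S_INR; have := pos_INR m.-1; lra. Qed.

Lemma Hgl_le k : gamma k * lambda k * mu / (2 * INR m) <= 1.
Proof.
case: HA2 => _ [_ [H _]].
have H1 := HmR.
have [Hg Hl] := Hpos k; have [Hg0 Hl0] := Hpos 0%nat.
have H2 : gamma k * lambda k <= gamma 0%nat * lambda 0%nat.
  apply: Rmult_le_compat; try lra; [exact: Hgam0 | exact: Hlam0].
have H3 : gamma k * lambda k <= 2 * INR m / mu by lra.
apply: (Rmult_le_reg_r (2 * INR m)); first lra.
rewrite Rmult_1_l /Rdiv Rmult_assoc Rinv_l; last lra.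
have : gamma k * lambda k * mu <= 2 * INR m / mu * mu by apply: Rmult_le_compat_r; lra.
have -> : 2 * INR m / mu * mu = 2 * INR m by field; lra.
lra.
Qed.

Lemma h_convex : convex_fun h.
Proof.
move=> x y t Ht; have := Hh x y t Ht.
have := dot_ge0 (vsub x y); rewrite vnorm_pow2 => H1 H2.
have : 0 <= mu / 2 * t * (1 - t) * dot (vsub x y) (vsub x y).
  apply: Rmult_le_pos => //; apply: Rmult_le_pos; try lra; apply: Rmult_le_pos; lra.
lra.
Qed.

Lemma HD : exists D, 0 <= D /\ forall x, X x -> vnorm x <= D.
Proof.
case: HXcpt => _ [M HM]; exists (Rmax M 0); split; first exact: Rmax_r.
move=> x Hx; apply: Rle_trans (HM x Hx) (Rmax_l _ _).
Qed.

Lemma iter_X k : X (xk k) /\ forall i, (i <= m)%nat -> X (xin k i).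
Proof.
case: Hit => H0 Hk.
have Hinner : forall k, X (xk k) -> forall i, (i <= m)%nat -> X (xin k i).
  move=> k' Hx; elim=> [|i IH] Hi; first by case: (Hk k') => ->.
  case: (Hk k') => _ [Hs _]; have [_ [_ [Hp _]]] := Hs i Hi; exact: Hp.
elim: k => [|k [IH _]]; first by split => //; apply: Hinner.
have Hx : X (xk k.+1) by case: (Hk k) => _ [_ ->]; apply: Hinner => //.
by split => //; apply: Hinner.
Qed.

Lemma fsum_convex j : (j <= m)%nat -> convex_fun (fsum j fi).
Proof.
elim: j => [|j IH] Hj x y t Ht.
  rewrite /fsum !big_nil; lra.
rewrite /fsum !big_nat_recr //= -!/(fsum j fi _).
have := IH (ltnW Hj) x y t Ht.
have := Hfi j.+1 ltac:(by rewrite Hj) x y t Ht.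
lra.
Qed.

End Main.

Arguments Hpos {m mu gamma lambda}.
Arguments Hmono {m mu gamma lambda}.
Arguments Hlam0 {m mu gamma lambda}.
Arguments Hgam0 {m mu gamma lambda}.
Arguments Hm_pos {m mu gamma lambda}.
Arguments HmR {m mu gamma lambda}.
Arguments Hgl_le {m mu} Hmu {gamma lambda}.
Arguments h_convex {n h mu}.
Arguments HD {n X}.
Arguments iter_X {n m X fi h gamma lambda xk xin gf gh}.
Arguments fsum_convex {n m fi}.

Lemma dot_le_vnorm {n} (a b : vec n) : dot a a <= dot b b -> vnorm a <= vnorm b.
Proof. move=> H; exact: sqrt_le_1_alt. Qed.

Lemma dot_swap_sub {n} (g x y : vec n) : dot g (vsub y x) = - dot (vsub x y) g.
Proof. rewrite dotBr (dotC (vsub x y)) dotBr; ring. Qed.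

Lemma dot_subC {n} (x y : vec n) : dot (vsub y x) (vsub y x) = dot (vsub x y) (vsub x y).
Proof. rewrite !dot_sub_sub (dotC y x); ring. Qed.

Section Main2.
Context (n m : nat) (X : vec n -> Prop) (fi : nat -> vec n -> R) (h : vec n -> R) (mu : R)
  (HXne : exists x, X x) (HXcpt : compact_set X) (HXcvx : convex_set X)
  (Hfi : forall i, (1 <= i <= m)%nat -> convex_fun (fi i))
  (Hmu : 0 < mu) (Hh : strongly_convex mu h)
  (gamma lambda : nat -> R) (HA2 : assumption_A2 m mu gamma lambda)
  (xk : nat -> vec n) (xin : nat -> nat -> vec n) (gf gh : nat -> nat -> vec n)
  (Hit : IRIG X m fi h gamma lambda xk xin gf gh).

Lemma HK (D : R) : exists K, 0 <= K /\
  (forall i, (1 <= i <= m)%nat -> forall x, vnorm x <= D + 1 -> Rabs (fi i x) <= K) /\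
  (forall x, vnorm x <= D + 1 -> Rabs (h x) <= K).
Proof.
have [Kh [Kh0 HKh]] := convex_ball_bnd h (D + 1) (h_convex Hmu Hh).
suff [K [HK0 HKf]] : exists K, 0 <= K /\
    (forall i, (1 <= i <= m)%nat -> forall x, vnorm x <= D + 1 -> Rabs (fi i x) <= K).
  exists (Rmax K Kh); split; first by apply: Rle_trans (Rmax_l _ _).
  split.
    by move=> i Hi x Hx; apply: Rle_trans (HKf i Hi x Hx) (Rmax_l _ _).
  by move=> x Hx; apply: Rle_trans (HKh x Hx) (Rmax_r _ _).
suff : forall j, exists K, 0 <= K /\
    (forall i, (1 <= i <= j)%nat -> (i <= m)%nat -> forall x, vnorm x <= D + 1 -> Rabs (fi i x) <= K).
  move=> /(_ m) [K [HK0 HK]]; exists K; split => // i Hi; apply: HK => //.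
  by case/andP: Hi.
elim=> [|j [K [HK0 HK]]].
  by exists 0; split; [lra|move=> i /andP [H1 H2]; move: (leq_trans H1 H2)].
case: (leqP j.+1 m) => Hj; last first.
  exists K; split => // i /andP [H1 H2] Hm; apply: HK => //; rewrite H1 /=.
  apply: (leq_trans Hm); by rewrite -ltnS.
have [K' [HK'0 HK']] := convex_ball_bnd (fi j.+1) (D + 1) (Hfi j.+1 ltac:(by rewrite Hj)).
exists (Rmax K K'); split; first by apply: Rle_trans (Rmax_l _ _).
move=> i /andP [H1 H2] Hm x Hx.
rewrite leq_eqVlt in H2; case/orP: H2 => H2.
  by move/eqP: H2 => ->; apply: Rle_trans (HK' x Hx) (Rmax_r _ _).
apply: Rle_trans (HK i _ Hm x Hx) (Rmax_l _ _); by rewrite H1.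
Qed.

Section Consts.
Variables (D K : R).
Hypotheses (HD0 : 0 <= D) (HDX : forall x, X x -> vnorm x <= D) (HK0 : 0 <= K)
  (HKf : forall i, (1 <= i <= m)%nat -> forall x, vnorm x <= D + 1 -> Rabs (fi i x) <= K)
  (HKh : forall x, vnorm x <= D + 1 -> Rabs (h x) <= K).

Let G := 2 * K.
Let G' := G + lambda 0%nat * G.

Lemma Lipf i : (1 <= i <= m)%nat -> forall a b, X a -> X b -> fi i b - fi i a <= G * vnorm (vsub b a).
Proof. move=> Hi a b Ha Hb; apply: (lipschitz_of_bnd _ D) => //; [exact: Hfi | exact: HKf | exact: HDX | exact: HDX]. Qed.

Lemma Liph a b : X a -> X b -> h b - h a <= G * vnorm (vsub b a).
Proof. move=> Ha Hb; apply: (lipschitz_of_bnd _ D) => //; [exact: (h_convex Hmu Hh) | exact: HDX | exact: HDX]. Qed.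

Lemma HG0 : 0 <= G. Proof. rewrite /G; lra. Qed.
Lemma HG'0 : 0 <= G'.
Proof. have := Hpos HA2 0%nat; rewrite /G' /G; nra. Qed.

Lemma Xin k i : (i <= m)%nat -> X (xin k i).
Proof. by move=> Hi; case: (iter_X Hit k) => _; apply. Qed.

Lemma Xk k : X (xk k).
Proof. by case: (iter_X Hit k). Qed.

Lemma c_bnd k : 0 < lambda k / INR m <= lambda 0%nat.
Proof.
have H1 := HmR HA2.
have [_ Hl] := Hpos HA2 k.
have := Hlam0 HA2 k => H2.
split; first by apply: Rdiv_lt_0_compat; lra.
apply: Rle_trans H2; apply: (Rmult_le_reg_r (INR m)); first lra.
rewrite /Rdiv Rmult_assoc Rinv_l; nra.
Qed.

Lemma d_bnd k i : (i < m)%nat ->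
  vnorm (vadd (gf k i) (vscale (lambda k / INR m) (gh k i))) <= G'.
Proof.
move=> Hi.
have HXi : vnorm (xin k i) <= D by apply: HDX; apply: Xin; exact: ltnW.
case: Hit => _ /(_ k) [_ [/(_ i Hi) [Hg [Hs _]] _]].
have Hgb : vnorm (gf k i) <= G.
  have Hi' : (1 <= i.+1 <= m)%nat by rewrite /= Hi.
  exact: (subgrad_bnd (fi i.+1) D K (xin k i) (gf k i) HK0 (HKf i.+1 Hi') HXi Hg).
have Hsb : vnorm (gh k i) <= G by exact: (subgrad_bnd h D K (xin k i) (gh k i) HK0 HKh HXi Hs).
apply: Rle_trans (vnorm_add _ _) _.
rewrite vnorm_scale Rabs_right; last by have := c_bnd k; lra.
have := c_bnd k; have := vnorm_ge0 (gh k i); rewrite /G'; nra.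
Qed.

Lemma step_move k i : (i < m)%nat ->
  vnorm (vsub (xin k i.+1) (xin k i)) <= gamma k * G'.
Proof.
move=> Hi.
case: Hit => _ /(_ k) [_ [/(_ i Hi) [_ [_ Hp]] _]].
have := proj_nonexp X _ _ (xin k i) HXcvx Hp (Xin k i (ltnW Hi)) => H.
have E : vsub (vsub (xin k i) (vscale (gamma k) (vadd (gf k i) (vscale (lambda k / INR m) (gh k i)))))
   (xin k i) = vscale (- gamma k) (vadd (gf k i) (vscale (lambda k / INR m) (gh k i))).
  by apply: functional_extensionality => j; rewrite /vsub /vscale; ring.
rewrite E in H; have := dot_le_vnorm _ _ H; rewrite vnorm_scale Rabs_Ropp Rabs_right.
  have := d_bnd k i Hi; have [Hg _] := Hpos HA2 k; move=> *; nra.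
have [Hg _] := Hpos HA2 k; lra.
Qed.

Lemma drift k i : (i <= m)%nat -> vnorm (vsub (xin k i) (xk k)) <= INR i * (gamma k * G').
Proof.
elim: i => [|i IH] Hi.
  have -> : xin k 0%nat = xk k by case: Hit => _ /(_ k) [-> _].
  have -> : vsub (xk k) (xk k) = (fun _ => 0) by apply: functional_extensionality => j; rewrite /vsub; ring.
  rewrite /vnorm /dot big1 ?sqrt_0 /=; [lra | move=> j _; ring].
apply: Rle_trans (vnorm_tri _ (xin k i) _) _.
have := step_move k i Hi; have := IH (ltnW Hi); rewrite S_INR; lra.
Qed.

Definition Ec := G' * G' + 2 * INR m * G' * (G + lambda 0%nat * G + 2 * lambda 0%nat * mu * D).

Lemma main_step k y i : X y -> (i < m)%nat ->
  dot (vsub (xin k i.+1) y) (vsub (xin k i.+1) y) <=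
  dot (vsub (xin k i) y) (vsub (xin k i) y)
  - 2 * gamma k * (fi i.+1 (xk k) - fi i.+1 y)
  - 2 * gamma k * (lambda k / INR m) * (h (xk k) - h y + mu / 2 * dot (vsub (xk k) y) (vsub (xk k) y))
  + gamma k * gamma k * Ec.
Proof.
move=> Hy Hi.
set x0 := xk k; set xi := xin k i; set g := gf k i; set s := gh k i.
set c := lambda k / INR m; set gm := gamma k.
set d := vadd g (vscale c s).
have [Hsub [Hstr Hp]] : subgrad (fi i.+1) xi g /\ subgrad h xi s /\
    is_proj X (vsub xi (vscale gm d)) (xin k i.+1).
  by case: Hit => _ /(_ k) [_ [/(_ i Hi) H _]].
have Hxi : X xi by apply: Xin; exact: ltnW.
have Hx0 : X x0 by apply: Xk.
have H1 := proj_nonexp X _ _ y HXcvx Hp Hy.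
have E1 : vsub (vsub xi (vscale gm d)) y = vsub (vsub xi y) (vscale gm d).
  by apply: functional_extensionality => j; rewrite /vsub; ring.
rewrite E1 (dot_sub_sub (vsub xi y)) dotZr dotZl dotZr /d dotDr dotZr -/d in H1.
set Ni := dot (vsub xi y) (vsub xi y) in H1 *.
set N0 := dot (vsub x0 y) (vsub x0 y).
set a := dot (vsub xi y) g in H1; set b := dot (vsub xi y) s in H1.
have Ha : fi i.+1 xi - fi i.+1 y <= a.
  have := Hsub y; rewrite dot_swap_sub -/a; lra.
have Hb : h xi - h y + mu / 2 * Ni <= b.
  have := strong_subgrad mu h xi s Hmu Hh Hstr y.
  rewrite dot_swap_sub dot_subC -/b -/Ni; lra.
set Dl := vnorm (vsub xi x0).
have HDl : Dl <= INR m * (gm * G').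
  apply: Rle_trans (drift k i (ltnW Hi)) _; apply: Rmult_le_compat_r.
    have := HG'0; have [Hg _] := Hpos HA2 k; rewrite /gm => *; nra.
  apply: le_INR; apply/leP; exact: ltnW.
have HDl0 : 0 <= Dl by apply: vnorm_ge0.
have Hlf : fi i.+1 x0 - fi i.+1 xi <= G * Dl.
  rewrite /Dl vnorm_subC; apply: Lipf => //; by rewrite /= Hi.
have Hlh : h x0 - h xi <= G * Dl by rewrite /Dl vnorm_subC; apply: Liph.
have HN : N0 - Ni <= 4 * D * Dl.
  have T : vnorm (vsub x0 y) <= Dl + vnorm (vsub xi y).
    apply: Rle_trans (vnorm_tri x0 xi y) _; rewrite (vnorm_subC x0 xi) -/Dl; lra.
  have B0 : vnorm (vsub x0 y) <= 2 * D.
    apply: Rle_trans (vnorm_sub_le _ _) _; have := HDX _ Hx0; have := HDX _ Hy; lra.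
  have Bi : vnorm (vsub xi y) <= 2 * D.
    apply: Rle_trans (vnorm_sub_le _ _) _; have := HDX _ Hxi; have := HDX _ Hy; lra.
  rewrite /N0 /Ni -!vnorm_sq.
  have := vnorm_ge0 (vsub x0 y); have := vnorm_ge0 (vsub xi y); nra.
have Hdd : dot d d <= G' * G'.
  rewrite -vnorm_sq; have := d_bnd k i Hi; have := vnorm_ge0 d; rewrite -/d; nra.
have [Hc0 Hc1] := c_bnd k; rewrite -/c in Hc0 Hc1.
have [Hg _] := Hpos HA2 k; rewrite -/gm in Hg.
have HG := HG0.
have Hab : (fi i.+1 x0 - fi i.+1 y) + c * (h x0 - h y + mu / 2 * N0)
            - Dl * (G + c * G + 2 * c * mu * D) <= a + c * b.
  have : c * (h x0 - h y - G * Dl + mu / 2 * N0 - 2 * mu * D * Dl) <= c * b.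
    apply: Rmult_le_compat_l; first lra.
    have : mu / 2 * (N0 - Ni) <= mu / 2 * (4 * D * Dl) by apply: Rmult_le_compat_l; lra.
    lra.
  lra.
have Herr : Dl * (G + c * G + 2 * c * mu * D) <=
            INR m * (gm * G') * (G + lambda 0%nat * G + 2 * lambda 0%nat * mu * D).
  apply: Rmult_le_compat => //.
    have : 0 <= c * G by apply: Rmult_le_pos; lra.
    have : 0 <= c * mu * D by apply: Rmult_le_pos; [apply: Rmult_le_pos|]; lra.
    lra.
  have : c * G <= lambda 0%nat * G by apply: Rmult_le_compat_r.
  have : c * mu * D <= lambda 0%nat * mu * D.
    apply: Rmult_le_compat_r => //; apply: Rmult_le_compat_r; lra.
  lra.
have H2 : - 2 * gm * (a + c * b) <= - 2 * gm * ((fi i.+1 x0 - fi i.+1 y) + c * (h x0 - h y + mu / 2 * N0))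
            + 2 * gm * (Dl * (G + c * G + 2 * c * mu * D)).
  have := Rmult_le_compat_l (2 * gm) _ _ ltac:(lra) Hab; lra.
have H3 : 2 * gm * (Dl * (G + c * G + 2 * c * mu * D)) <=
          2 * gm * (INR m * (gm * G') * (G + lambda 0%nat * G + 2 * lambda 0%nat * mu * D)).
  apply: Rmult_le_compat_l => //; lra.
have H4 : gm * gm * dot d d <= gm * gm * (G' * G') by apply: Rmult_le_compat_l; nra.
rewrite /Ec.
lra.
Qed.


Lemma sum_steps k y j : X y -> (j <= m)%nat ->
  dot (vsub (xin k j) y) (vsub (xin k j) y) <=
  dot (vsub (xk k) y) (vsub (xk k) y)
  - 2 * gamma k * (fsum j fi (xk k) - fsum j fi y)
  - 2 * gamma k * (INR j * (lambda k / INR m)) * (h (xk k) - h y + mu / 2 * dot (vsub (xk k) y) (vsub (xk k) y))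
  + INR j * (gamma k * gamma k * Ec).
Proof.
move=> Hy; elim: j => [|j IH] Hj.
  have -> : xin k 0%nat = xk k by case: Hit => _ /(_ k) [-> _].
  rewrite /fsum !big_geq // /=; lra.
have := main_step k y j Hy Hj; have := IH (ltnW Hj).
have Hs : forall x, fsum j.+1 fi x = fsum j fi x + fi j.+1 x.
  by move=> x; rewrite /fsum big_nat_recr.
rewrite !Hs S_INR.
lra.
Qed.

Lemma iter_ineq k y : is_argmin X (fun x => fsum m fi x + lambda k * h x) y ->
  dot (vsub (xk k.+1) y) (vsub (xk k.+1) y) <=
  (1 - gamma k * lambda k * mu) * dot (vsub (xk k) y) (vsub (xk k) y)
  + INR m * (gamma k * gamma k * Ec).
Proof.
move=> [Hy Hmin].
have := sum_steps k y m Hy (leqnn m).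
have -> : xin k m = xk k.+1 by case: Hit => _ /(_ k) [_ [_ ->]].
have Hc : INR m * (lambda k / INR m) = lambda k.
  have := HmR HA2; move=> ?; field; lra.
rewrite Hc.
have := Hmin (xk k) (Xk k).
have [Hg _] := Hpos HA2 k.
move=> H1 H2.
have : 0 <= 2 * gamma k * (fsum m fi (xk k) + lambda k * h (xk k) - (fsum m fi y + lambda k * h y)).
  apply: Rmult_le_pos; lra.
lra.
Qed.

Lemma mid_F k a b : X a -> X b ->
  fsum m fi (cmb (1/2) a b) + lambda k * h (cmb (1/2) a b) <=
  (fsum m fi a + lambda k * h a) / 2 + (fsum m fi b + lambda k * h b) / 2
  - lambda k * mu / 8 * dot (vsub a b) (vsub a b).
Proof.
move=> Ha Hb.
have H1 := fsum_convex Hfi m (leqnn m) a b (1/2) ltac:(lra).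
have H2 := Hh a b (1/2) ltac:(lra).
rewrite vnorm_pow2 in H2.
have [_ Hl] := Hpos HA2 k.
rewrite /cmb.
have : lambda k * h (vadd (vscale (1 / 2) a) (vscale (1 - 1 / 2) b)) <=
  lambda k * (1 / 2 * h a + (1 - 1 / 2) * h b - mu / 2 * (1 / 2) * (1 - 1 / 2) * dot (vsub a b) (vsub a b)).
  apply: Rmult_le_compat_l; lra.
lra.
Qed.

Lemma argmin_gap k a b : is_argmin X (fun x => fsum m fi x + lambda k * h x) b -> X a ->
  lambda k * mu / 4 * dot (vsub a b) (vsub a b) <=
  (fsum m fi a + lambda k * h a) - (fsum m fi b + lambda k * h b).
Proof.
move=> [Hb Hmin] Ha.
have Hmid := HXcvx a b (1/2) Ha Hb ltac:(lra).
have := Hmin _ Hmid; rewrite -/(cmb (1/2) a b).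
have := mid_F k a b Ha Hb.
lra.
Qed.

Let B := 4 * G / mu.

Lemma mindist k a b :
  is_argmin X (fun x => fsum m fi x + lambda k * h x) a ->
  is_argmin X (fun x => fsum m fi x + lambda k.+1 * h x) b ->
  vnorm (vsub a b) <= B * (lambda k / lambda k.+1 - 1).
Proof.
move=> Ha Hb.
have Xa := proj1 Ha; have Xb := proj1 Hb.
have G1 := argmin_gap k.+1 a b Hb Xa.
have G2 := argmin_gap k b a Ha Xb.
rewrite dot_subC in G2.
have [_ Hl] := Hpos HA2 k; have [_ Hl1] := Hpos HA2 k.+1; have [_ Hmon] := Hmono HA2 k.
set N := dot (vsub a b) (vsub a b) in G1 G2.
set v := vnorm (vsub a b).
have HN : N = v * v by rewrite /v vnorm_sq.
have Hv0 : 0 <= v by apply: vnorm_ge0.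
have Hlip : h b - h a <= G * v by rewrite /v vnorm_subC; apply: Liph.
have HN0 : 0 <= N by apply: dot_ge0.
have Hsum : lambda k.+1 * mu / 4 * N <= (lambda k - lambda k.+1) * (h b - h a).
  have Hlm : 0 <= lambda k * mu by apply: Rmult_le_pos; lra.
  have : 0 <= lambda k * mu / 4 * N by apply: Rmult_le_pos => //; lra.
  lra.
have H3 : (lambda k - lambda k.+1) * (h b - h a) <= (lambda k - lambda k.+1) * (G * v).
  apply: Rmult_le_compat_l; lra.
have H4 : lambda k.+1 * mu / 4 * (v * v) <= (lambda k - lambda k.+1) * G * v by rewrite HN in Hsum; lra.
have HG := HG0.
case: (Req_dec v 0) => Hv.
  rewrite Hv /B; apply: Rmult_le_pos.
    apply: Rmult_le_pos; [lra|]; apply: Rlt_le; apply: Rinv_0_lt_compat; lra.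
  apply: (Rmult_le_reg_r (lambda k.+1)); first lra.
  rewrite Rmult_0_l Rmult_minus_distr_r /Rdiv Rmult_assoc Rinv_l; lra.
have Hvp : 0 < v by lra.
have H5 : lambda k.+1 * mu / 4 * v <= (lambda k - lambda k.+1) * G.
  apply: (Rmult_le_reg_r v) => //; lra.
have -> : B * (lambda k / lambda k.+1 - 1) = (lambda k - lambda k.+1) * G / (lambda k.+1 * mu / 4).
  rewrite /B; field; lra.
apply: (Rmult_le_reg_r (lambda k.+1 * mu / 4)).
  apply: Rmult_lt_0_compat; [apply: Rmult_lt_0_compat|]; lra.
rewrite /Rdiv (Rmult_assoc ((lambda k - lambda k.+1) * G)) Rinv_l; last first.
  have : 0 < lambda k.+1 * mu * / 4 by apply: Rmult_lt_0_compat; [apply: Rmult_lt_0_compat|]; lra.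
  lra.
lra.
Qed.

Lemma young_rec (p e u : R) : 0 < p <= 1 ->
  (1 - p) * ((e + u) * (e + u)) <= (1 - p / 2) * (e * e) + 2 / p * (u * u).
Proof.
move=> [Hp0 Hp1].
set r := / p.
have Hr : p * r = 1 by rewrite /r Rinv_r; lra.
have Hr0 : 0 < r by apply: Rinv_0_lt_compat.
have -> : 2 / p = 2 * r by rewrite /r /Rdiv.
have H1 : 2 * e * u <= p / 2 * (e * e) + 2 * r * (u * u).
  have : 0 <= r * ((p * e - 2 * u) * (p * e - 2 * u)) by apply: Rmult_le_pos; [lra | apply: Rle_0_sqr].
  have -> : r * ((p * e - 2 * u) * (p * e - 2 * u)) = (p * r) * p * e * e - 4 * (p * r) * e * u + 4 * r * (u * u) by ring.
  rewrite Hr; lra.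
have H2 : 0 <= 1 - p by lra.
have : (1 - p) * (2 * e * u) <= (1 - p) * (p / 2 * (e * e) + 2 * r * (u * u)) by apply: Rmult_le_compat_l.
have : 0 <= p * (e * e) by apply: Rmult_le_pos; nra.
have : 0 <= p * (2 * r * (u * u)) by apply: Rmult_le_pos; [lra|]; apply: Rmult_le_pos; nra.
have E : p * (2 * r * (u * u)) = 2 * (u * u).
  have -> : p * (2 * r * (u * u)) = (p * r) * (2 * (u * u)) by ring.
  rewrite Hr; ring.
rewrite E.
move=> *; nra.
Qed.

End Consts.

Lemma cv_const (c : R) : Un_cv (fun _ => c) c.
Proof. by move=> e He; exists 0%nat => k _; rewrite /Rdist Rminus_diag Rabs_R0; lra. Qed.

Lemma sum_shift (u : nat -> R) N : sum_f_R0 (fun k => u (S k)) N = sum_f_R0 u (S N) - u 0%nat.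
Proof. elim: N => [|N IH] /=; first ring. rewrite IH /=; ring. Qed.

Lemma sum_scal' (c : R) (u : nat -> R) N : sum_f_R0 (fun k => c * u k) N = c * sum_f_R0 u N.
Proof. elim: N => [|N IH] /=; first ring. rewrite IH; ring. Qed.

Lemma sum_plus' (u v : nat -> R) N : sum_f_R0 (fun k => u k + v k) N = sum_f_R0 u N + sum_f_R0 v N.
Proof. elim: N => [|N IH] /=; first ring. rewrite IH; ring. Qed.

Lemma cv_ext (u v : nat -> R) l : (forall k, u k = v k) -> Un_cv u l -> Un_cv v l.
Proof. move=> H Hu; have -> : v = u by apply: functional_extensionality => k; rewrite H. done. Qed.

Lemma partA xlam :
  (forall k, is_argmin X (fun x => fsum m fi x + lambda k * h x) (xlam k)) ->
  Un_cv (fun k => vnorm (vsub (xk k.+1) (xlam k))) 0.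
Proof.
move=> Hx.
have [D [HD0 HDX]] := HD HXcpt.
have [K [HK0 [HKf HKh]]] := HK D.
have HmR1 := HmR HA2.
have [Hg00 Hl00] := Hpos HA2 0%nat.
set E := Ec D K.
have HE0 : 0 <= E.
  rewrite /E /Ec.
  have H1 : 0 <= 2 * K + lambda 0%nat * (2 * K) by nra.
  have H2 : 0 <= 2 * K + lambda 0%nat * (2 * K) + 2 * lambda 0%nat * mu * D.
    have : 0 <= lambda 0%nat * mu * D by apply: Rmult_le_pos => //; nra.
    lra.
  have : 0 <= 2 * INR m * (2 * K + lambda 0%nat * (2 * K)) by nra.
  nra.
set B := 4 * (2 * K) / mu.
have HB0 : 0 <= B by rewrite /B; apply: Rmult_le_pos; [lra|]; apply: Rlt_le; apply: Rinv_0_lt_compat.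
set a := fun k => dot (vsub (xk k.+1) (xlam k)) (vsub (xk k.+1) (xlam k)).
set b := fun k => gamma k.+1 * lambda k.+1 * mu / (4 * INR m).
set w := fun k => / (gamma k.+1 * lambda k.+1) * (lambda k / lambda k.+1 - 1) ^ 2.
set c := fun k => 4 * INR m * (B * B) / mu * w k + INR m * E * (gamma k.+1) ^ 2.
have Hw0 : forall k, 0 <= w k.
  move=> k; rewrite /w; have [Hg Hl] := Hpos HA2 k.+1; apply: Rmult_le_pos.
    apply: Rlt_le; apply: Rinv_0_lt_compat; nra.
  apply: pow2_ge_0.
have Hcoef : 0 <= 4 * INR m * (B * B) / mu.
  apply: Rmult_le_pos; [nra|]; apply: Rlt_le; apply: Rinv_0_lt_compat; lra.
have Ha : Un_cv a 0.
  case: HA2 => _ [_ [_ [Hbinf [[lw Hlw] [[lg Hlg] _]]]]].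
  apply: (polyak a b c (4 * INR m * (B * B) / mu * lw + INR m * E * (lg - gamma 0%nat ^ 2))).
  - by move=> k; apply: dot_ge0.
  - move=> k; rewrite /b; have [Hg Hl] := Hpos HA2 k.+1.
    apply: Rmult_le_pos; [apply: Rlt_le; apply: Rmult_lt_0_compat => //; exact: Rmult_lt_0_compat|].
    apply: Rlt_le; apply: Rinv_0_lt_compat; lra.
  - move=> k; rewrite /c; apply: Rplus_le_le_0_compat.
      by apply: Rmult_le_pos.
    apply: Rmult_le_pos; [nra|apply: pow2_ge_0].
  - move=> k.
    have Hi : dot (vsub (xk k.+2) (xlam k.+1)) (vsub (xk k.+2) (xlam k.+1)) <=
      (1 - gamma k.+1 * lambda k.+1 * mu) * dot (vsub (xk k.+1) (xlam k.+1)) (vsub (xk k.+1) (xlam k.+1))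
      + INR m * (gamma k.+1 * gamma k.+1 * E).
      by apply: (iter_ineq D K) => //; apply: Hx.
    have Hmd : vnorm (vsub (xlam k) (xlam k.+1)) <= B * (lambda k / lambda k.+1 - 1).
      by apply: (mindist D K) => //; apply: Hx.
    have [Hg Hl] := Hpos HA2 k.+1.
    set q := gamma k.+1 * lambda k.+1 * mu in Hi.
    set p := q / (2 * INR m).
    have Hq0 : 0 < q by rewrite /q; apply: Rmult_lt_0_compat => //; apply: Rmult_lt_0_compat.
    have Hp1 : p <= 1 by rewrite /p /q; apply: (Hgl_le Hmu HA2).
    have Hp0 : 0 < p by rewrite /p; apply: Rdiv_lt_0_compat; lra.
    have Hpq : p <= q.
      rewrite /p; apply: (Rmult_le_reg_r (2 * INR m)); first lra.
      rewrite /Rdiv Rmult_assoc Rinv_l; nra.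
    set W := dot (vsub (xk k.+1) (xlam k.+1)) (vsub (xk k.+1) (xlam k.+1)) in Hi.
    have HW0 : 0 <= W by apply: dot_ge0.
    set e := vnorm (vsub (xk k.+1) (xlam k)).
    set u := B * (lambda k / lambda k.+1 - 1) in Hmd.
    have He0 : 0 <= e by apply: vnorm_ge0.
    have Hu0 : 0 <= u by apply: Rle_trans Hmd; apply: vnorm_ge0.
    have HWe : W <= (e + u) * (e + u).
      rewrite /W -vnorm_sq; apply: sq_le_of_le; first by apply: vnorm_ge0.
      apply: Rle_trans (vnorm_tri _ (xlam k) _) _; rewrite -/e; lra.
    have H1 : (1 - q) * W <= (1 - p) * W by apply: Rmult_le_compat_r; lra.
    have H2 : (1 - p) * W <= (1 - p) * ((e + u) * (e + u)) by apply: Rmult_le_compat_l; lra.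
    have H3 := young_rec p e u (conj Hp0 Hp1).
    have Hae : a k = e * e by rewrite /a /e vnorm_sq.
    have Hbk : b k = p / 2 by rewrite /b /p /q; field; lra.
    have Hck : c k = 2 / p * (u * u) + INR m * (gamma k.+1 * gamma k.+1 * E).
      rewrite /c /w /p /q /u /B /=; field; repeat split; lra.
    rewrite Hae Hbk Hck /a.
    lra.
  - move=> M.
    have [N HN] := Hbinf (M * (4 * INR m) / mu + gamma 0%nat * lambda 0%nat).
    exists N => k Hk.
    have E1 : sum_f_R0 b k = mu / (4 * INR m) * (sum_f_R0 (fun j => gamma j * lambda j) k.+1 - gamma 0%nat * lambda 0%nat).
      rewrite -(sum_shift (fun j => gamma j * lambda j)) -sum_scal'; apply: sum_eq => j _.
      rewrite /b; field; lra.
    rewrite E1.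
    have := HN k.+1 ltac:(lia).
    move=> H.
    have Hc0 : 0 < mu / (4 * INR m) by apply: Rdiv_lt_0_compat; lra.
    have : mu / (4 * INR m) * (M * (4 * INR m) / mu) < mu / (4 * INR m) * (sum_f_R0 (fun j => gamma j * lambda j) k.+1 - gamma 0%nat * lambda 0%nat).
      apply: Rmult_lt_compat_l => //; lra.
    have -> : mu / (4 * INR m) * (M * (4 * INR m) / mu) = M by field; lra.
    done.
  - apply: (cv_ext (fun N => 4 * INR m * (B * B) / mu * sum_f_R0 w N +
                    INR m * E * (sum_f_R0 (fun j => gamma j ^ 2) N.+1 - gamma 0%nat ^ 2))).
      move=> N; rewrite /c sum_plus' !sum_scal' (sum_shift (fun j => gamma j ^ 2)) //.
    apply: CV_plus.
      apply: (CV_mult (fun _ => _)); [exact: cv_const | exact: Hlw].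
    apply: (CV_mult (fun _ => _)); first exact: cv_const.
    apply: (CV_minus _ (fun _ => _)); last exact: cv_const.
    move=> eps Heps; have [N HN] := Hlg eps Heps; exists N => k Hk; apply: HN; lia.
apply: cv_sqrt0; first by move=> k; apply: vnorm_ge0.
apply: (cv_ext a) => // k; by rewrite /a vnorm_sq.
Qed.



Lemma lam_anti j k : (j <= k)%nat -> lambda k <= lambda j.
Proof.
elim: k => [|k IH] Hjk.
  by rewrite leqn0 in Hjk; move/eqP: Hjk => ->; lra.
rewrite leq_eqVlt in Hjk; case/orP: Hjk => [/eqP -> | Hjk]; first lra.
have := IH Hjk; have [_ Hm] := Hmono HA2 k; lra.
Qed.

Lemma partB : Un_cv lambda 0 -> forall xh : vec n,
  is_argmin (fun x => is_argmin X (fsum m fi) x) h xh ->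
  Un_cv (fun k => vnorm (vsub (xk k) xh)) 0.
Proof.
move=> Hl0 xh [[HXxh Hfxh] Hhxh].
have [D [HD0 HDX]] := HD HXcpt.
have [K [HK0 [HKf HKh]]] := HK D.
have Hfc := fsum_convex Hfi m (leqnn m).
have [Kf [HKf0 HKfb]] := convex_ball_bnd (fsum m fi) (D + 1) Hfc.
set Lf := 2 * Kf.
have Lipf : forall a b, X a -> X b -> fsum m fi a - fsum m fi b <= Lf * vnorm (vsub a b).
  move=> a b Ha Hb; apply: (lipschitz_of_bnd _ D) => //; exact: HDX.
have Liph' : forall a b, X a -> X b -> h a - h b <= 2 * K * vnorm (vsub a b).
  by move=> a b Ha Hb; apply: (Liph D K) => //.
have Hhb : forall x, X x -> Rabs (h x) <= K.
  move=> x Hx; apply: HKh; have := HDX x Hx; lra.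
have Hfb : forall x, X x -> Rabs (fsum m fi x) <= Kf.
  move=> x Hx; apply: HKfb; have := HDX x Hx; lra.
have HXcl : Defs.closed_set X by case: HXcpt.
set F := fun k x => fsum m fi x + lambda k * h x.
have Hex : forall k, exists z, is_argmin X (F k) z.
  move=> k; have [Hg Hl] := Hpos HA2 k.
  apply: (exists_min X (F k) (Lf + lambda k * (2 * K)) (lambda k * mu / 8) (- Kf - lambda k * K)) => //.
  - apply: Rmult_lt_0_compat; [apply: Rmult_lt_0_compat|]; lra.
  - move=> a b Ha Hb; rewrite /F.
    have := Lipf a b Ha Hb; have := Liph' a b Ha Hb.
    have := vnorm_ge0 (vsub a b) => *.
    have : lambda k * (h a - h b) <= lambda k * (2 * K * vnorm (vsub a b)) by apply: Rmult_le_compat_l; lra.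
    lra.
  - move=> a b Ha Hb; rewrite /F; have := mid_F k a b Ha Hb.
    lra.
  - move=> x Hx; rewrite /F; have := Hfb x Hx; have := Hhb x Hx.
    move=> H1 H2; have H3 := Rle_abs (- fsum m fi x); rewrite Rabs_Ropp in H3.
    have H4 := Rle_abs (- h x); rewrite Rabs_Ropp in H4.
    have : lambda k * (- K) <= lambda k * h x by apply: Rmult_le_compat_l; lra.
    lra.
set z := fun k => proj1_sig (constructive_indefinite_description _ (Hex k)).
have Hz : forall k, is_argmin X (F k) (z k).
  by move=> k; rewrite /z; case: (constructive_indefinite_description _ _).
have HA := partA z Hz.
have HzX : forall k, X (z k) by move=> k; case: (Hz k).
have Hi : forall k, h (z k) <= h xh.
  move=> k; have [_ Hmin] := Hz k; have := Hmin xh HXxh; have := Hfxh (z k) (HzX k).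
  rewrite /F; have [_ Hl] := Hpos HA2 k => H1 H2.
  have : lambda k * h (z k) <= lambda k * h xh by lra.
  move=> H3; apply: (Rmult_le_reg_l (lambda k)) => //.
have Hii : forall j k, (j <= k)%nat ->
    0 <= h (z k) - h (z j) /\
    mu / 4 * dot (vsub (z j) (z k)) (vsub (z j) (z k)) <= h (z k) - h (z j).
  move=> j k Hjk.
  have Hg := argmin_gap j (z k) (z j) (Hz j) (HzX k).
  have [_ Hmk] := Hz k; have Hmk' := Hmk (z j) (HzX j); rewrite /F in Hmk'.
  have [_ Hlj] := Hpos HA2 j; have [_ Hlk] := Hpos HA2 k.
  have Hlkj := lam_anti j k Hjk.
  rewrite dot_subC in Hg.
  set N := dot (vsub (z j) (z k)) (vsub (z j) (z k)) in Hg *.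
  set v := vnorm (vsub (z j) (z k)).
  have HN : N = v * v by rewrite /v vnorm_sq.
  have Hv0 : 0 <= v by apply: vnorm_ge0.
  set Dl := h (z k) - h (z j).
  have Hmain : lambda j * mu / 4 * N <= (lambda j - lambda k) * Dl by rewrite /Dl; lra.
  have HDl : 0 <= Dl.
    apply: Rnot_lt_le => Hneg.
    have H1 : (lambda j - lambda k) * Dl <= 0 by nra.
    have H2 : 0 <= lambda j * mu / 4 * N.
      apply: Rmult_le_pos; [|rewrite HN; nra].
      have : 0 <= lambda j * mu by apply: Rmult_le_pos; lra.
      lra.
    have HN0 : N = 0.
      have Hpos' : 0 < lambda j * mu / 4 by have := Rmult_lt_0_compat _ _ Hlj Hmu; lra.
      have : lambda j * mu / 4 * N <= 0 by lra.
      rewrite HN in H2 *; nra.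
    have Hv : v = 0 by rewrite HN in HN0; nra.
    have := Liph' (z j) (z k) (HzX j) (HzX k); rewrite -/v Hv Rmult_0_r; rewrite /Dl in Hneg; lra.
  split => //.
  have : lambda j * (mu / 4 * N) <= lambda j * Dl.
    have : (lambda j - lambda k) * Dl <= lambda j * Dl by nra.
    lra.
  move=> H; apply: (Rmult_le_reg_l (lambda j)) => //.
have Hgrow : Un_growing (fun k => h (z k)).
  by move=> k; have [H _] := Hii k k.+1 (leqnSn k); lra.
have Hub : has_ub (fun k => h (z k)).
  by exists (h xh) => x [k ->]; apply: Hi.
have [Hlim Hhcv] := growing_cv _ Hgrow Hub.
have HCh := CV_Cauchy _ (exist _ Hlim Hhcv).
have Hzc : forall eps, 0 < eps -> exists N, forall j k, (N <= j)%nat -> (N <= k)%nat ->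
    vnorm (vsub (z j) (z k)) < eps.
  move=> eps Heps.
  have [N HN] := HCh (mu / 4 * ((eps / 2) * (eps / 2))) ltac:(apply: Rmult_lt_0_compat; nra).
  exists N => j k Hj Hk.
  have Hd := HN j k ltac:(apply/leP; exact: Hj) ltac:(apply/leP; exact: Hk).
  rewrite /Rdist in Hd.
  have Hd1 := Rle_abs (h (z j) - h (z k)); have Hd2 := Rle_abs (- (h (z j) - h (z k))).
  rewrite Rabs_Ropp in Hd2.
  have Hgen : forall a b, (a <= b)%nat -> Rabs (h (z a) - h (z b)) < mu / 4 * ((eps / 2) * (eps / 2)) ->
      vnorm (vsub (z a) (z b)) < eps.
    move=> a b Hab Hd'.
    have [H1 H2] := Hii a b Hab.
    have H3 := Rle_abs (- (h (z a) - h (z b))); rewrite Rabs_Ropp in H3.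
    have H4 : mu / 4 * dot (vsub (z a) (z b)) (vsub (z a) (z b)) < mu / 4 * ((eps / 2) * (eps / 2)) by lra.
    have H5 : dot (vsub (z a) (z b)) (vsub (z a) (z b)) <= (eps / 2) * (eps / 2).
      apply: Rlt_le; apply: (Rmult_lt_reg_l (mu / 4)) => //; lra.
    have := vnorm_le_of_sq (vsub (z a) (z b)) (eps / 2) ltac:(lra) H5; lra.
  case: (leqP j k) => Hjk; first by apply: Hgen.
  rewrite vnorm_subC; apply: Hgen; first exact: ltnW.
  by rewrite Rabs_minus_sym.
have [zb Hzb] := vec_complete z Hzc.
have HXzb : X zb := HXcl z zb HzX Hzb.
have Hzb' : Un_cv (fun k => vnorm (vsub zb (z k))) 0.
  apply: (cv_ext (fun k => vnorm (vsub (z k) zb))) => // k; exact: vnorm_subC.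
have Hfzb : fsum m fi zb <= fsum m fi xh.
  apply: (le_of_cv _ _ (fun k => 2 * K * lambda k + Lf * vnorm (vsub zb (z k)))).
    apply: cv_add0; [exact: cv_scal | exact: cv_scal].
  move=> k.
  have H1 := Lipf zb (z k) HXzb (HzX k).
  have [_ Hmin] := Hz k; have H2 := Hmin xh HXxh; rewrite /F in H2.
  have H3 := Hhb (z k) (HzX k); have H4 := Hhb xh HXxh.
  have H5 := Rle_abs (h xh); have H6 := Rle_abs (- h (z k)); rewrite Rabs_Ropp in H6.
  have [_ Hl] := Hpos HA2 k.
  have : lambda k * (h xh - h (z k)) <= lambda k * (2 * K) by apply: Rmult_le_compat_l; lra.
  lra.
have HXstar : is_argmin X (fsum m fi) zb.
  split => // y Hy; have := Hfxh y Hy; lra.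
have Hhzb : h zb <= h xh.
  apply: (le_of_cv _ _ (fun k => 2 * K * vnorm (vsub zb (z k)))); first exact: cv_scal.
  move=> k; have := Liph' zb (z k) HXzb (HzX k); have := Hi k; lra.
have Hmid : is_argmin X (fsum m fi) (cmb (1/2) zb xh).
  split; first exact: (HXcvx zb xh (1/2) HXzb HXxh ltac:(lra)).
  move=> y Hy; have := Hfc zb xh (1/2) ltac:(lra); rewrite -/(cmb (1/2) zb xh).
  have := Hfxh y Hy; lra.
have H8 := Hhxh _ Hmid.
have H9 := Hh zb xh (1/2) ltac:(lra); rewrite vnorm_pow2 -/(cmb (1/2) zb xh) in H9.
have HN0 : dot (vsub zb xh) (vsub zb xh) <= 0 by nra.
have Hv0 : vnorm (vsub zb xh) = 0.
  have := dot_ge0 (vsub zb xh); rewrite /vnorm => H.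
  have -> : dot (vsub zb xh) (vsub zb xh) = 0 by lra.
  exact: sqrt_0.
have Hzx : Un_cv (fun k => vnorm (vsub (z k) xh)) 0.
  apply: (cv_squeeze0 _ (fun k => vnorm (vsub (z k) zb))) => // k; split; first exact: vnorm_ge0.
  have := vnorm_tri (z k) zb xh; lra.
apply: cv_shift.
apply: (cv_squeeze0 _ (fun k => vnorm (vsub (xk k.+1) (z k)) + vnorm (vsub (z k) xh))).
  move=> k; split; first exact: vnorm_ge0.
  exact: vnorm_tri.
exact: cv_add0.
Qed.

End Main2.

Theorem proposition1
  (n m : nat) (X : vec n -> Prop) (fi : nat -> vec n -> R) (h : vec n -> R) (mu : R)
  (HXne : exists x, X x) (HXcpt : compact_set X) (HXcvx : convex_set X)
  (Hfi : forall i, (1 <= i <= m)%nat -> convex_fun (fi i))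
  (Hmu : 0 < mu) (Hh : strongly_convex mu h)
  (gamma lambda : nat -> R) (HA2 : assumption_A2 m mu gamma lambda)
  (xk : nat -> vec n) (xin : nat -> nat -> vec n) (gf gh : nat -> nat -> vec n)
  (Hit : IRIG X m fi h gamma lambda xk xin gf gh) :
  (forall xlam : nat -> vec n,
     (forall k, is_argmin X (fun x => fsum m fi x + lambda k * h x) (xlam k)) ->
     Un_cv (fun k => vnorm (vsub (xk k.+1) (xlam k))) 0) /\
  (Un_cv lambda 0 ->
   forall xh : vec n,
     is_argmin (fun x => is_argmin X (fsum m fi) x) h xh ->
     Un_cv (fun k => vnorm (vsub (xk k) xh)) 0).
Proof.
split.
  move=> xlam Hx.
  exact: (partA n m X fi h mu HXcpt HXcvx Hfi Hmu Hh gamma lambda HA2 xk xin gf gh Hit xlam Hx).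
move=> Hl xh Hxh.
exact: (partB n m X fi h mu HXne HXcpt HXcvx Hfi Hmu Hh gamma lambda HA2 xk xin gf gh Hit Hl xh Hxh).
Qed.
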